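(* Let $\mathbf{k}$ be an algebraically closed field, $G=\mathrm{GL}_n$, $M=\mathbf{k}^n$ the natural module, $\underline{G}=G\ltimes M$ and $\underline{\mathfrak{g}}=\mathrm{Lie}(\underline{G})=\mathfrak{gl}_n\times M$. For $(X,w)\in\underline{\mathcal{N}}$ let $\underline{\mathfrak{g}}_{(X,w)}=\{(Y,u)\in\underline{\mathfrak{g}}: [(X,w),(Y,u)]=0\}$ and $\underline{G}_{(X,w)}=\{(g,v)\in\underline{G}:\mathrm{Ad}(g,v)(X,w)=(X,w)\}$. Then (1) $\underline{\mathfrak{g}}_{(X,w)}=\mathrm{Lie}(\underline{G}_{(X,w)})$, and (2) $\underline{G}_{(X,w)}$ is connected.
   Context: $\underline{G}$ is $G\times M$ with product $(g_1,v_1)(g_2,v_2)=(g_1g_2,g_1v_2+v_1)$; the bracket on $\mathfrak{gl}_n\times M$ is $[(X_1,v_1),(X_2,v_2)]=([X_1,X_2],X_1v_2-X_2v_1)$; the adjoint action is $\mathrm{Ad}(g,v)(X,w)=(gXg^{-1},-(gXg^{-1})v+gw)$. $\underline{\mathcal{N}}=\mathcal{N}\times M$ with $\mathcal{N}$ the nilpotent cone of $\mathfrak{gl}_n$. *)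

(* Defs.v *)
From HB Require Import structures.
From mathcomp Require Import all_boot all_order all_algebra.
From mathcomp Require Import mpoly.
Set Implicit Arguments. Unset Strict Implicit. Unset Printing Implicit Defensive.
Import GRing.Theory.
Local Open Scope ring_scope.

(* The ambient affine space of the semidirect product  GL_n x| k^n  and of its
   Lie algebra  gl_n x k^n  is  'M[K]_n * 'cV[K]_n  =  k^(n*n + n). *)
Definition coord (K : fieldType) (n : nat) (p : 'M[K]_n * 'cV[K]_n)
  : 'I_(n * n + n) -> K :=
  fun i => match split i with
           | inl k => mxvec p.1 0 k
           | inr k => p.2 k 0
           end.

Definition nilpotent_mx (K : fieldType) (n : nat) (X : 'M[K]_n) : Prop :=
  exists m : nat, X ^+ m = 0.

Definition in_Gu (K : fieldType) (n : nat) (p : 'M[K]_n * 'cV[K]_n) : Prop :=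
  p.1 \in unitmx.

Definition Adu (K : fieldType) (n : nat) (gv Xw : 'M[K]_n * 'cV[K]_n)
  : 'M[K]_n * 'cV[K]_n :=
  let gXg := gv.1 *m Xw.1 *m invmx gv.1 in
  (gXg, - (gXg *m gv.2) + gv.1 *m Xw.2).

Definition bracketu (K : fieldType) (n : nat) (a b : 'M[K]_n * 'cV[K]_n)
  : 'M[K]_n * 'cV[K]_n :=
  (a.1 *m b.1 - b.1 *m a.1, a.1 *m b.2 - b.1 *m a.2).

Definition centu (K : fieldType) (n : nat) (Xw : 'M[K]_n * 'cV[K]_n)
  : 'M[K]_n * 'cV[K]_n -> Prop :=
  fun Yu => bracketu Xw Yu = 0.

Definition stabu (K : fieldType) (n : nat) (Xw : 'M[K]_n * 'cV[K]_n)
  : 'M[K]_n * 'cV[K]_n -> Prop :=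
  fun gv => in_Gu gv /\ Adu gv Xw = Xw.

Definition vanishing (K : fieldType) (n : nat) (S : 'M[K]_n * 'cV[K]_n -> Prop)
  (f : {mpoly K[n * n + n]}) : Prop :=
  forall p, S p -> f.@[coord p] = 0.

(* For a closed subgroup
   H of the group G x| M (a principal open in the ambient affine space), its
   tangent space at the identity (1,0) is Lie(H). *)
Definition tangent (K : fieldType) (n : nat) (S : 'M[K]_n * 'cV[K]_n -> Prop)
  (p : 'M[K]_n * 'cV[K]_n) : 'M[K]_n * 'cV[K]_n -> Prop :=
  fun Yu => forall f, vanishing S f ->
    \sum_(i < n * n + n) (f^`M(i)).@[coord p] * coord Yu i = 0.

Definition Lie_sub (K : fieldType) (n : nat) (H : 'M[K]_n * 'cV[K]_n -> Prop)
  : 'M[K]_n * 'cV[K]_n -> Prop := tangent H (1%:M, 0).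

(* Zariski-closed subsets of S (subspace topology from the ambient affine
   space; for S contained in G x| M this is the Zariski topology of S). *)
Definition zclosed_in (K : fieldType) (n : nat) (S A : 'M[K]_n * 'cV[K]_n -> Prop)
  : Prop :=
  exists F : {mpoly K[n * n + n]} -> Prop,
    forall p, A p <-> (S p /\ forall f, F f -> f.@[coord p] = 0).

Definition zconnected (K : fieldType) (n : nat) (S : 'M[K]_n * 'cV[K]_n -> Prop)
  : Prop :=
  forall A B, zclosed_in S A -> zclosed_in S B ->
    (forall p, S p <-> (A p \/ B p)) ->
    (forall p, ~ (A p /\ B p)) ->
    (forall p, ~ A p) \/ (forall p, ~ B p).

(* Main.v *)
Require Import Defs.
From HB Require Import structures.
From mathcomp Require Import all_boot all_order all_algebra.
From mathcomp Require Import mpoly.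
From Stdlib Require Import Classical.
Set Implicit Arguments. Unset Strict Implicit. Unset Printing Implicit Defensive.
Import GRing.Theory.
Local Open Scope ring_scope.
Local Notation coord := Defs.coord.

Section Chain.
Variables (K : fieldType) (N : nat) (h : 'I_N -> {poly K}).

Definition Pm (f : {mpoly K[N]}) : {poly K} := mmap (@polyC K) h f.

Lemma Pm_horner f t : (Pm f).[t] = f.@[fun i => (h i).[t]].
Proof.
rewrite /Pm /meval /mmap horner_sum; apply: eq_bigr => m _.
rewrite hornerM hornerC /mmap1 horner_prod; congr (_ * _).
by apply: eq_bigr => i _; rewrite horner_exp.
Qed.

Definition Phi (f : {mpoly K[N]}) :=
  (Pm f)^`() = \sum_i Pm (f^`M(i)) * (h i)^`().

Lemma PhiD f g : Phi f -> Phi g -> Phi (f + g).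
Proof.
rewrite /Phi /Pm => Hf Hg; rewrite mmapD derivD Hf Hg -big_split /=.
by apply: eq_bigr => i _; rewrite mderivD mmapD mulrDl.
Qed.

Lemma PhiM f g : Phi f -> Phi g -> Phi (f * g).
Proof.
rewrite /Phi /Pm => Hf Hg; rewrite rmorphM derivM Hf Hg /=.
rewrite mulr_suml mulr_sumr -big_split /=.
apply: eq_bigr => i _; rewrite mderivM mmapD !rmorphM /=.
rewrite mulrDl; congr (_ + _); rewrite -!mulrA; congr (_ * _); by rewrite mulrC.
Qed.

Lemma PhiC c : Phi c%:MP.
Proof.
rewrite /Phi /Pm mmapC derivC big1 // => i _.
by rewrite mderivC mmap0 mul0r.
Qed.

Lemma PhiX i : Phi 'X_i.
Proof.
rewrite /Phi /Pm mmapX mmap1U (bigD1 i) //= big1 ?addr0.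
  rewrite mderivX mnm1E eqxx mulr1n scale1r.
  have -> : (U_(i) - U_(i) = 0)%MM by apply/mnmP => j; rewrite mnmBE subnn mnm0E.
  by rewrite mmapX mmap11 mul1r.
move=> j ji; rewrite mderivX mnm1E eq_sym (negbTE (ji)) ?mulr0n ?scale0r ?mmap0 ?mul0r //.
Qed.

Lemma Phi0 : Phi 0.
Proof. by have := PhiC 0; rewrite raddf0. Qed.

Lemma Phi1 : Phi 1.
Proof. by have := PhiC 1; rewrite rmorph1. Qed.

Lemma PhiXn f k : Phi f -> Phi (f ^+ k).
Proof. move=> Hf; elim: k => [|k IH]; first by rewrite expr0; exact: Phi1. by rewrite exprS; apply: PhiM. Qed.

Lemma Phi_all f : Phi f.
Proof.
rewrite (mpolyE f); apply: (big_ind Phi Phi0 PhiD) => m _.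
rewrite -mul_mpolyC; apply: PhiM; first exact: PhiC.
rewrite mpolyXE_id; apply: (big_ind Phi Phi1 PhiM) => i _.
exact/PhiXn/PhiX.
Qed.
End Chain.

Section ClosedPoly.
Variable K : closedFieldType.

Lemma poly_zero_off (Q P : {poly K}) : Q != 0 ->
  (forall t, Q.[t] != 0 -> P.[t] = 0) -> P = 0.
Proof.
move=> Q0 H; apply/eqP; apply/negPn/negP => P0.
have /closed_nonrootP [t] : Q * P != 0 by rewrite mulf_neq0.
rewrite /root hornerM mulf_eq0 negb_or => /andP [Qt Pt].
by rewrite (H t Qt) eqxx in Pt.
Qed.

Lemma deriv_lin (P : {poly K}) c : (forall t, P.[t] = c * t) -> P^`().[0] = c.
Proof.
move=> H; have -> : P = c%:P * 'X.
  apply/eqP; rewrite -subr_eq0; apply/eqP.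
  apply: (@poly_zero_off 1) => [|t _]; first exact: oner_neq0.
  by rewrite hornerD hornerN hornerM hornerC hornerX H subrr.
by rewrite derivM derivC derivX mul0r add0r mulr1 hornerC.
Qed.
End ClosedPoly.

Section Geo.
Variables (K : closedFieldType) (n : nat) (X : 'M[K]_n) (w : 'cV[K]_n).
Local Notation N := (n * n + n)%N.
Local Notation pairT := ('M[K]_n * 'cV[K]_n)%type.

Lemma coord_l (p : pairT) i j : coord p (lshift n (mxvec_index i j)) = p.1 i j.
Proof. by rewrite /coord (unsplitK (inl _ : 'I_(n*n) + 'I_n)) mxvecE. Qed.

Lemma coord_r (p : pairT) i : coord p (rshift (n * n) i) = p.2 i 0.
Proof. by rewrite /coord (unsplitK (inr _ : 'I_(n*n) + 'I_n)). Qed.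

Definition hl (a b : pairT) (i : 'I_N) : {poly K} :=
  (coord a i)%:P + (coord b i)%:P * 'X.

Definition pt (a b : pairT) (t : K) : pairT := (a.1 + t *: b.1, a.2 + t *: b.2).

Lemma coord_pt a b t i : coord (pt a b t) i = (hl a b i).[t].
Proof.
rewrite /hl hornerD hornerM hornerX !hornerC /coord /pt /=.
case: split => k; rewrite ?linearD ?linearZ /= !mxE mulrC //.
Qed.

Lemma hl0 a b i : (hl a b i).[0] = coord a i.
Proof. by rewrite /hl hornerD hornerM hornerX !hornerC mulr0 addr0. Qed.

Lemma hl_deriv a b i : (hl a b i)^`() = (coord b i)%:P.
Proof. by rewrite /hl derivD derivM !derivC derivX mul0r add0r mulr1 add0r. Qed.

Lemma Pm_pt a b f t : (Pm (hl a b) f).[t] = f.@[coord (pt a b t)].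
Proof. by rewrite Pm_horner; apply: meval_eq => i; rewrite coord_pt. Qed.

Lemma tangent_sum (f : {mpoly K[N]}) a b :
  \sum_(i < N) (f^`M(i)).@[coord a] * coord b i = (Pm (hl a b) f)^`().[0].
Proof.
have := Phi_all (hl a b) f; rewrite /Phi => ->; rewrite horner_sum.
apply: eq_bigr => i _; rewrite hornerM hl_deriv hornerC Pm_horner; congr (_ * _).
by apply: meval_eq => j; rewrite hl0.
Qed.

Definition Qd (a b : pairT) : {poly K} :=
  \det (\matrix_(i, j) ((a.1 i j)%:P + (b.1 i j)%:P * 'X)).

Lemma Qd_horner a b t : (Qd a b).[t] = \det (pt a b t).1.
Proof.
rewrite /Qd -horner_evalE -det_map_mx; congr (\det _); apply/matrixP => i j.
by rewrite !mxE /= horner_evalE hornerD hornerM hornerX !hornerC mulrC.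
Qed.

Definition Lin (p : pairT) := p.1 *m X = X *m p.1 /\ p.1 *m w = w + X *m p.2.
Definition Dir (p : pairT) := p.1 *m X = X *m p.1 /\ p.1 *m w = X *m p.2.

Lemma stabuE p : stabu (X, w) p <-> p.1 \in unitmx /\ Lin p.
Proof.
case: p => g v; rewrite /stabu /in_Gu /Adu /Lin /=; split.
  move=> [gu [E1 E2]]; split => //.
  have E : g *m X = X *m g by rewrite -[in RHS]E1 mulmxKV.
  split => //; rewrite E1 in E2.
  by apply: (addrI (- (X *m v))); rewrite E2 addrCA addNr addr0.
move=> [gu [E1 E2]]; split => //.
have E : g *m X *m invmx g = X by rewrite E1 mulmxK.
by rewrite E E2 addrCA addNr addr0.
Qed.

Lemma Lin_pt a b t : Lin a -> Dir b -> Lin (pt a b t).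
Proof.
move=> [a1 a2] [b1 b2]; rewrite /Lin /pt /=; split.
  by rewrite mulmxDl mulmxDr -scalemxAl -scalemxAr a1 b1.
by rewrite mulmxDl mulmxDr -scalemxAl -scalemxAr a2 b2 addrA.
Qed.

Lemma centuE Yu : centu (X, w) Yu <-> Dir Yu.
Proof.
case: Yu => Y u; rewrite /centu /bracketu /Dir /=; split.
  move=> E; have E1 := congr1 fst E; have E2 := congr1 snd E; simpl in E1, E2.
  by split; apply/eqP; rewrite eq_sym -subr_eq0 ?E1 ?E2.
move=> [E1 E2]; by rewrite E1 E2 !subrr.
Qed.

Lemma stab_line a b t : Lin a -> Dir b -> (Qd a b).[t] != 0 ->
  stabu (X, w) (pt a b t).
Proof.
move=> La Db Qt; apply/stabuE; split; last exact: Lin_pt.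
by rewrite unitmxE unitfE -Qd_horner.
Qed.
End Geo.

Section Main.
Variables (K : closedFieldType) (n : nat) (X : 'M[K]_n) (w : 'cV[K]_n).
Local Notation N := (n * n + n)%N.
Local Notation pairT := ('M[K]_n * 'cV[K]_n)%type.

Definition gv i j : {mpoly K[N]} := 'X_(lshift n (mxvec_index i j)).
Definition vv i : {mpoly K[N]} := 'X_(rshift (n * n) i).
Definition f1 i j : {mpoly K[N]} :=
  \sum_k (gv i k * (X k j)%:MP - (X i k)%:MP * gv k j).
Definition f2 i : {mpoly K[N]} :=
  \sum_k (gv i k * (w k 0)%:MP - (X i k)%:MP * vv k) - (w i 0)%:MP.

Lemma f1E (p : pairT) i j : (f1 i j).@[coord p] = (p.1 *m X - X *m p.1) i j.
Proof.
rewrite /f1 raddf_sum !mxE -sumrB; apply: eq_bigr => k _.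
by rewrite raddfB /= !rmorphM /= !mevalC /gv !mevalXU !coord_l.
Qed.

Lemma f2E (p : pairT) i : (f2 i).@[coord p] = (p.1 *m w - X *m p.2 - w) i 0.
Proof.
rewrite /f2 mevalB raddf_sum !mxE -sumrB mevalC; congr (_ - _); apply: eq_bigr => k _.
by rewrite raddfB /= !rmorphM /= !mevalC /gv /vv !mevalXU coord_l coord_r.
Qed.

Lemma Qd_nz (a b : pairT) : a.1 \in unitmx -> Qd a b != 0.
Proof.
move=> ua; apply/eqP => Q0; have := Qd_horner a b 0.
rewrite Q0 horner0 /pt /= scale0r addr0 => /esym/eqP.
by apply/negP; rewrite -unitfE -unitmxE.
Qed.


Definition e0 : pairT := (1%:M, 0).

Lemma Lin_e0 : Lin X w e0.
Proof. rewrite /Lin /e0 /=; split; [by rewrite mul1mx mulmx1 | by rewrite mul1mx mulmx0 addr0]. Qed.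

Lemma part1a (Yu : pairT) : Dir X w Yu -> Lie_sub (stabu (X, w)) Yu.
Proof.
move=> DY f vf; rewrite (tangent_sum f e0 Yu).
have P0 : Pm (hl e0 Yu) f = 0.
  apply: (@poly_zero_off _ (Qd e0 Yu)); first by apply: Qd_nz; rewrite unitmx1.
  move=> t Qt; rewrite Pm_pt; apply: vf; exact: stab_line Lin_e0 DY Qt.
by rewrite P0 deriv0 horner0.
Qed.

Lemma part1b (Yu : pairT) : Lie_sub (stabu (X, w)) Yu -> Dir X w Yu.
Proof.
case: Yu => Y u H.
have H1 : forall i j, (Y *m X - X *m Y) i j = 0.
  move=> i j.
  have V : vanishing (stabu (X, w)) (f1 i j).
    move=> p /stabuE [_ [E _]]; by rewrite f1E E subrr mxE.
  have := H _ V; rewrite (tangent_sum _ e0 (Y, u)).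
  rewrite (@deriv_lin _ _ ((Y *m X - X *m Y) i j)) // => t.
  rewrite Pm_pt f1E /pt /e0 /= mulmxDl mulmxDr mul1mx mulmx1 -scalemxAl -scalemxAr.
  by rewrite opprD addrACA subrr add0r -scalerBr mxE mulrC.
have H2 : forall i, (Y *m w - X *m u) i 0 = 0.
  move=> i.
  have V : vanishing (stabu (X, w)) (f2 i).
    move=> p /stabuE [_ [_ E]]; by rewrite f2E E addrK subrr mxE.
  have := H _ V; rewrite (tangent_sum _ e0 (Y, u)).
  rewrite (@deriv_lin _ _ ((Y *m w - X *m u) i 0)) // => t.
  rewrite Pm_pt f2E /pt /e0 /= mulmxDl mulmxDr mul1mx -scalemxAl -scalemxAr mulmx0 add0r.
  by rewrite addrAC [w + _]addrC addrK -scalerBr mxE mulrC.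
split; apply/eqP; rewrite -subr_eq0; apply/eqP/matrixP => i j /=.
  by have := H1 i j; rewrite !mxE.
by have := H2 i; rewrite (ord1 j) !mxE.
Qed.

Lemma part2 : zconnected (stabu (X, w)).
Proof.
move=> A B [FA HA] [FB HB] cov disj.
apply: NNPP => Hn; have [nA nB] := not_or_and _ _ Hn.
have [p0 Ap0] : exists p, A p.
  by apply: NNPP => h; apply: nA => p Ap; apply: h; exists p.
have [q0 Bq0] : exists p, B p.
  by apply: NNPP => h; apply: nB => p Bp; apply: h; exists p.
have Sp0 : stabu (X, w) p0 by apply/cov; left.
have Sq0 : stabu (X, w) q0 by apply/cov; right.
move: (Sp0) => /stabuE [up La]; move: (Sq0) => /stabuE [uq Lq].
pose b : pairT := (q0.1 - p0.1, q0.2 - p0.2).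
have Db : Dir X w b.
  case: La => p1 p2; case: Lq => q1 q2; rewrite /Dir /b /=; split.
    by rewrite mulmxBl mulmxBr p1 q1.
  by rewrite mulmxBl mulmxBr p2 q2 opprD addrACA subrr add0r.
have pt0 : pt p0 b 0 = p0 by rewrite /pt !scale0r !addr0; exact: esym (surjective_pairing p0).
have pt1 : pt p0 b 1 = q0.
  by rewrite /pt /b /= !scale1r [p0.1 + _]addrC [p0.2 + _]addrC !subrK; exact: esym (surjective_pairing q0).
have [fA [FAf PfA]] : exists f, FA f /\ Pm (hl p0 b) f != 0.
  apply: NNPP => h; apply: (disj q0); split => //; apply/HA; split => // f Ff.
  have P0 : Pm (hl p0 b) f = 0.
    by apply/eqP; apply: NNPP => h'; apply: h; exists f; split => //; apply/negP.
  by rewrite -pt1 -Pm_pt P0 horner0.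
have [gB [FBg PgB]] : exists f, FB f /\ Pm (hl p0 b) f != 0.
  apply: NNPP => h; apply: (disj p0); split => //; apply/HB; split => // f Ff.
  have P0 : Pm (hl p0 b) f = 0.
    by apply/eqP; apply: NNPP => h'; apply: h; exists f; split => //; apply/negP.
  by rewrite -pt0 -Pm_pt P0 horner0.
have : Qd p0 b * Pm (hl p0 b) fA * Pm (hl p0 b) gB != 0.
  by rewrite !mulf_neq0 // Qd_nz.
move=> /closed_nonrootP [t]; rewrite /root !hornerM !mulf_eq0 !negb_or.
move=> /andP [/andP [Qt Ft] Gt].
have St := stab_line La Db Qt.
case: ((cov _).1 St) => [/HA [_ HA'] | /HB [_ HB']].
  by move: Ft; rewrite Pm_pt HA' ?eqxx.
by move: Gt; rewrite Pm_pt HB' ?eqxx.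
Qed.

End Main.

Unset Implicit Arguments.
Theorem lemma1p1 (K : closedFieldType) (n : nat) (X : 'M[K]_n) (w : 'cV[K]_n) :
  nilpotent_mx X ->
  (forall Yu : 'M[K]_n * 'cV[K]_n,
      centu (X, w) Yu <-> Lie_sub (stabu (X, w)) Yu)
  /\ zconnected (stabu (X, w)).
Proof.
move=> _; split; last exact: part2.
move=> Yu; split => [/centuE|]; first exact: part1a.
by move=> /part1b /centuE.
Qed.
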